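(* Let $g:\mathbb{R}\to[0,+\infty)$ be lower semicontinuous and assume there are $a_1>0$, $a_2\in\mathbb{R}$ with $g(\delta)\ge a_1|\delta|+a_2$ for all $\delta\in\mathbb{R}$. Let $f:\mathbb{R}^{N\times N}\to[0,+\infty)$, $f(\xi)=g(\det\xi)$. If $f$ is ${\rm curl}$-$\infty$ quasiconvex, then $g$ is level convex; hence $f$ is polyquasiconvex.
   Context: $Q:=(-\tfrac12,\tfrac12)^N$. A non-negative Borel $f:\mathbb{R}^{N\times N}\to[0,\infty)$ is ${\rm curl}$-$\infty$ quasiconvex if $f(\xi)=\lim_{p\to\infty}\inf\{(\int_Qf^p(\xi+Du(x))dx)^{1/p}:u\in W^{1,\infty}_{\rm per}(Q;\mathbb{R}^N)\}$ for every $\xi$, with $W^{1,\infty}_{\rm per}$ the $Q$-periodic functions in $W^{1,\infty}(\mathbb{R}^N;\mathbb{R}^N)$. Level convex: $g(\lambda s+(1-\lambda)t)\le\max\{g(s),g(t)\}$. Polyquasiconvex: $f=h\circ T$ with $h$ level convex and $T(\xi)$ the vector of all minors of $\xi$. *)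

(* Defs.v *)
From HB Require Import structures.
From mathcomp Require Import all_boot all_order all_algebra.
From mathcomp Require Import all_classical all_reals all_analysis.
Set Implicit Arguments. Unset Strict Implicit. Unset Printing Implicit Defensive.
Import Order.TTheory GRing.Theory Num.Theory.
Import numFieldNormedType.Exports.
Local Open Scope classical_set_scope.
Local Open Scope ring_scope.

Section Defs.
Variable R : realType.

Definition Q1 : set R := `](- 2^-1), 2^-1[%classic.

(** Iterated Lebesgue integral over the cube (-1/2,1/2)^k of a non-negative
    function of the coordinates; at level k.+1 the coordinate k is
    integrated (outermost), then coordinates k-1, ..., 0.  By Tonelli this
    is the integral w.r.t. the k-dimensional Lebesgue measure on the cube. *)
Fixpoint cube_iint (k : nat) (G : (nat -> R) -> \bar R) : \bar R :=
  match k with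
  | 0%N => G (fun _ => 0)
  | k'.+1 => (\int[@lebesgue_measure R]_(t in Q1)
               cube_iint k' (fun x => G (fun n => if n == k' then t else x n)))%E
  end.

Definition cube_integral (N : nat) (F : 'rV[R]_N -> \bar R) : \bar R :=
  cube_iint N (fun x => F (\row_(i < N) x (i : nat))).

(** W^{1,oo}_per(Q;R^N): Q-periodic Lipschitz maps R^N -> R^N
    (Lipschitz + periodic = continuous representative of a W^{1,oo} map). *)
Definition W1inf_per (N : nat) (u : 'rV[R]_N -> 'rV[R]_N) : Prop :=
  lipschitz u /\
  forall (j : 'I_N) (x : 'rV[R]_N), u (x + delta_mx 0 j) = u x.

(** Gradient Du(x): (Du(x))_{ij} = partial_j u_i (x) (defined a.e.). *)
Definition grad (N : nat) (u : 'rV[R]_N -> 'rV[R]_N) (x : 'rV[R]_N) : 'M[R]_N :=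
  \matrix_(i < N, j < N) (derive u x (delta_mx 0 j)) 0 i.

Definition Lp_energy (N : nat) (f : 'M[R]_N -> R) (p : R) (xi : 'M[R]_N)
    (u : 'rV[R]_N -> 'rV[R]_N) : \bar R :=
  poweR (cube_integral (fun x => ((f (xi + grad u x)) `^ p)%:E)) p^-1.

(** curl-oo quasiconvexity (f non-negative, Borel: preimages of open sets lie in
    the sigma-algebra generated by the open sets of R^{NxN}). *)
Definition curl_inf_qc (N : nat) (f : 'M[R]_N -> R) : Prop :=
  (forall xi, 0 <= f xi) /\
  (forall A : set R, open A ->
     smallest (sigma_algebra [set: 'M[R]_N]) [set U | open U] (f @^-1` A)) /\
  forall xi : 'M[R]_N,
    (fun p : R => ereal_inf [set Lp_energy f p xi u | u in W1inf_per (N:=N)])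
      @ +oo --> (f xi)%:E.

Definition level_convex (V : lmodType R) (h : V -> R) : Prop :=
  forall (l : R) (s t : V), 0 <= l <= 1 ->
    h (l *: s + (1 - l) *: t) <= Num.max (h s) (h t).

Definition minor_idx (N : nat) :=
  {AB : {set 'I_N} * {set 'I_N} | (#|AB.1| == #|AB.2|) && (0 < #|AB.1|)%N}.

Definition minor (N : nat) (xi : 'M[R]_N) (ab : minor_idx N) : R :=
  let E := eqP (andP (valP ab)).1 in
  \det (\matrix_(i, j) xi (enum_val i) (enum_val (cast_ord E j))).

Definition minors (N : nat) (xi : 'M[R]_N) : {ffun minor_idx N -> R} :=
  [ffun ab => minor xi ab].

Definition polyquasiconvex (N : nat) (f : 'M[R]_N -> R) : Prop :=
  exists h : {ffun minor_idx N -> R} -> R,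
    level_convex h /\ forall xi, f xi = h (minors xi).

End Defs.

(* Main.v *)
Require Import Defs.
From HB Require Import structures.
From mathcomp Require Import all_boot all_order all_algebra.
From mathcomp Require Import all_classical all_reals all_analysis.
Import Order.TTheory GRing.Theory Num.Theory.
Import numFieldNormedType.Exports.
Local Open Scope classical_set_scope.
Local Open Scope ring_scope.
From mathcomp Require Import measurable_realfun.
From mathcomp Require Import lra ring zify.
Section S.
Variable R : realType.
Local Notation mu := (@lebesgue_measure R).

Lemma le_int_any (D : set R) (f1 f2 : R -> \bar R) :
  (forall x, D x -> (0 <= f1 x)%E) -> (forall x, D x -> (0 <= f2 x)%E) ->
  (forall x, D x -> (f1 x <= f2 x)%E) ->
  (\int[mu]_(x in D) f1 x <= \int[mu]_(x in D) f2 x)%E.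
Proof.
move=> h1 h2 h12; rewrite !ge0_integralE //=.
apply: ereal_sup_le => _ [h hf <-]; exists h => //= x.
apply: le_trans (hf x) _; rewrite /patch; case: ifP => // /set_mem Dx.
exact: h12.
Qed.

Lemma muQ1 : mu (@Q1 R) = 1%E.
Proof.
rewrite /Q1 lebesgue_measure_itv /= lte_fin.
have h : - 2^-1 < 2^-1 :> R by rewrite gtrN // invr_gt0.
rewrite h -EFinB opprK; congr (_%:E).
by rewrite [1 in RHS](splitr 1) !mul1r.
Qed.

Lemma mQ1 : measurable (@Q1 R).
Proof. exact: measurable_itv. Qed.

Lemma int_bound (f : R -> \bar R) (Bad : set R) (c : R) :
  measurable Bad -> mu Bad = 0%E -> 0 <= c ->
  (forall x, @Q1 R x -> (0 <= f x)%E) ->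
  (forall x, @Q1 R x -> ~ Bad x -> (f x <= c%:E)%E) ->
  (\int[mu]_(x in @Q1 R) f x <= c%:E)%E.
Proof.
move=> mB muB c0 f0 fc.
pose f2 := fun x => if x \in Bad then +oo%E else c%:E.
have f20 : forall x, (0 <= f2 x)%E.
  by move=> x; rewrite /f2; case: ifP => _ //; rewrite lee_fin.
have mf2 : measurable_fun [set: R] f2.
  move=> _ Y mY; rewrite setTI.
  have -> : f2 @^-1` Y = (Bad `&` [set _ | Y +oo%E]) `|` (~` Bad `&` [set _ | Y c%:E]).
    apply/seteqP; split => x /=; rewrite /f2.
      case: ifP => h Yx; [left; split => //; exact: set_mem h|right; split => //].
      by move=> Bx; move: h; rewrite (mem_set Bx).
    case=> -[Bx Yx]; first by rewrite (mem_set Bx).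
    by case: ifP => // /set_mem.
  have mP (P : Prop) : measurable [set _ : R | P].
    have [p|p] := pselect P.
      by rewrite (_ : [set _ | P] = setT) //; apply/seteqP; split.
    by rewrite (_ : [set _ | P] = set0) //; apply/seteqP; split.
  apply: measurableU; apply: measurableI => //; exact: measurableC.
apply: (@le_trans _ _ (\int[mu]_(x in @Q1 R) f2 x)%E).
  apply: le_int_any => // x Qx; rewrite /f2; case: ifP => [_|/negbT h]; first exact: leey.
  by apply: fc => // Bx; move: h; rewrite (mem_set Bx).
rewrite (@ge0_negligible_integral _ _ _ mu (@Q1 R) Bad f2) //.
all: try (exact: mB). all: try (exact: mQ1).
2: exact: (measurable_funTS mf2).
rewrite (@eq_integral _ _ _ mu _ (cst c%:E)); last first.
  move=> x /set_mem [_ nB]; rewrite /f2; case: ifP => // /set_mem.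
  by move/nB.
rewrite (@integral_cst _ _ _ mu); last by apply: measurableD; [exact: mQ1|exact: mB].
rewrite -[leRHS]mule1; apply: lee_wpmul2l; first by rewrite lee_fin.
  rewrite -muQ1; apply: le_measure; rewrite ?inE //; last exact: mQ1.
  by apply: measurableD; [exact: mQ1|exact: mB].
Qed.

Lemma iint_ge0 k (H : (nat -> R) -> \bar R) :
  (forall x, (0 <= H x)%E) -> (0 <= cube_iint k H)%E.
Proof.
elim: k H => [|k IH] H H0 /=; first exact: H0.
by apply: integral_ge0 => t _; exact: IH.
Qed.

Lemma iint_bound k (H : (nat -> R) -> \bar R) (Bad : set R) (c : R) :
  (0 < k)%N -> measurable Bad -> mu Bad = 0%E -> 0 <= c ->
  (forall x, (0 <= H x)%E) ->
  (forall x, @Q1 R (x 0%N) -> ~ Bad (x 0%N) -> (H x <= c%:E)%E) ->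
  (cube_iint k H <= c%:E)%E.
Proof.
move=> + mB muB c0.
elim: k H => [//|[|k] IH] H _ H0 Hc.
  apply: (int_bound (fun t => cube_iint 0 (fun x => H (fun n => if n == 0%N then t else x n))) Bad c mB muB c0) => [t _|t Qt Bt] /=. exact: (H0 (fun n : nat => if n == 0%N then t else 0%R)).
  by apply: (Hc (fun n : nat => if n == 0%N then t else 0%R)).
apply: (int_bound (fun t => cube_iint k.+1 (fun x => H (fun n => if n == k.+1 then t else x n))) Bad c mB muB c0) => [t _ |t _ _].
  by apply: iint_ge0 => x; exact: H0.
apply: IH => // x Qx Bx; exact: Hc.
Qed.
End S.

Section Tent.
Variable R : realType.
Variable l : R.
Hypothesis l0 : 0 < l.
Hypothesis l1 : l < 1.

Definition frac (y : R) : R := y - (Num.floor y)%:~R.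
Definition tent (y : R) : R := Num.min ((1 - l) * frac y) (l * (1 - frac y)).

Lemma frac_ge0 y : 0 <= frac y.
Proof. by rewrite /frac subr_ge0 floor_le. Qed.

Lemma frac_lt1 y : frac y < 1.
Proof. by rewrite /frac ltrBlDl -intrD1 floorD1_gt. Qed.

Lemma floor_shift y h : 0 <= frac y + h < 1 -> Num.floor (y + h) = Num.floor y.
Proof.
move=> /andP[a b]; apply: floor_def; rewrite intrD1.
by apply/andP; split; rewrite /frac in a b; lra.
Qed.

Lemma frac_shift y h : 0 <= frac y + h < 1 -> frac (y + h) = frac y + h.
Proof. by move=> H; rewrite /frac floor_shift //; lra. Qed.

Lemma frac1 y : frac (y + 1) = frac y.
Proof.
rewrite /frac (@floor_def _ (y + 1) (Num.floor y + 1)); first by rewrite intrD1; lra.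
have := floor_itv y; rewrite !intrD1 => /andP[a b]; apply/andP; split; lra.
Qed.

Lemma tent_lo y : frac y <= l -> tent y = (1 - l) * frac y.
Proof. by move=> H; rewrite /tent; apply/min_idPl; nra. Qed.

Lemma tent_hi y : l <= frac y -> tent y = l * (1 - frac y).
Proof. by move=> H; rewrite /tent; apply/min_idPr; nra. Qed.

Definition V (m : int) (y : R) : R := Num.max ((1 - l) * (y - m%:~R)) (l * (m%:~R - y)).

Lemma tent_leV m y : tent y <= V m y.
Proof.
have := floor_itv y; rewrite intrD1 => /andP[a b].
have [hm|hm] := lerP m (Num.floor y).
  have : (m%:~R : R) <= (Num.floor y)%:~R by rewrite ler_int.
  move=> hm'; rewrite /tent /V ge_min; apply/orP; left.
  rewrite le_max; apply/orP; left; rewrite /frac ler_pM2l ?subr_gt0 //; lra.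
have : ((Num.floor y)%:~R + 1 : R) <= m%:~R by rewrite -intrD1 ler_int lezD1.
move=> hm'; rewrite /tent /V ge_min; apply/orP; right.
rewrite le_max; apply/orP; right; rewrite /frac ler_pM2l //; lra.
Qed.

Lemma tent_V y : exists m, tent y = V m y.
Proof.
have fy0 := frac_ge0 y; have fy1 := frac_lt1 y.
have [H|H] := lerP (frac y) l.
  exists (Num.floor y); rewrite tent_lo // /V max_l /frac //.
  rewrite /frac in fy0 H; nra.
exists (Num.floor y + 1); rewrite tent_hi ?ltW // /V intrD1 max_r /frac.
  by rewrite mulrBr mulrBr mulrBr mulr1; lra.
rewrite /frac in fy1 H; nra.
Qed.

Lemma V_lip m y z : V m y <= V m z + `|y - z|.
Proof.
have h1 := ler_norm (y - z); have h2 : z - y <= `|y - z| by rewrite distrC ler_norm.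
have h0 := normr_ge0 (y - z).
have h3 : (1 - l) * (y - z) <= (1 - l) * `|y - z| by rewrite ler_wpM2l // subr_ge0 ltW.
have h4 : l * (z - y) <= l * `|y - z| by rewrite ler_wpM2l // ltW.
have h5 : 0 <= l * `|y - z| by rewrite mulr_ge0 // ltW.
have h6 : 0 <= (1 - l) * `|y - z| by rewrite mulr_ge0 // subr_ge0 ltW.
rewrite /V ge_max; apply/andP; split.
  apply: le_trans (_ : (1 - l) * (z - m%:~R) + `|y - z| <= _).
    lra.
  by rewrite lerD2r le_max lexx.
apply: le_trans (_ : l * (m%:~R - z) + `|y - z| <= _).
  lra.
by rewrite lerD2r le_max lexx orbT.
Qed.

Lemma tent_lip y z : `|tent y - tent z| <= `|y - z|.
Proof.
have A : forall y z, tent y - tent z <= `|y - z|.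
  move=> a b; have [m ->] := tent_V b.
  have := tent_leV m a; have := V_lip m a b; lra.
rewrite ler_norml A andbT; have := A z y; rewrite distrC; lra.
Qed.

Lemma tent1 y : tent (y + 1) = tent y.
Proof. by rewrite /tent frac1. Qed.

Lemma tent_near y : frac y != 0 -> frac y != l ->
  exists2 s : R, (s = 1 - l \/ s = - l) &
  exists2 e : R, 0 < e & forall h : R, `|h| < e -> tent (y + h) - tent y = s * h.
Proof.
move=> f0 fl; have l1' : l < 1 := l1; have l0' : 0 < l := l0; have fy0 := frac_ge0 y; have fy1 := frac_lt1 y.
have fy0' : 0 < frac y by rewrite lt_neqAle eq_sym f0.
have [H|H] := ltrP (frac y) l.
  exists (1 - l); first by left.
  exists (Num.min (frac y) (l - frac y)); first by rewrite lt_min fy0' subr_gt0.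
  move=> h; rewrite lt_min => /andP[h1 h2].
  move: h1 h2; rewrite !ltr_norml => /andP[h1 h1'] /andP[h2 h2'].
  have {h1}h1 : - frac y < h := h1. have {h1'}h1' : h < frac y := h1'.
  have {h2}h2 : - (l - frac y) < h := h2. have {h2'}h2' : h < l - frac y := h2'.
  have hh : 0 <= frac y + h < 1 by apply/andP; split; lra.
  rewrite tent_lo ?frac_shift // ?tent_lo //; try lra.
have H' : l < frac y by rewrite lt_neqAle eq_sym fl.
exists (- l); first by right.
exists (Num.min (frac y - l) (1 - frac y)); first by rewrite lt_min !subr_gt0 H' fy1.
move=> h; rewrite lt_min => /andP[h1 h2].
move: h1 h2; rewrite !ltr_norml => /andP[h1 h1'] /andP[h2 h2'].
have {h1}h1 : - (frac y - l) < h := h1. have {h1'}h1' : h < frac y - l := h1'.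
have {h2}h2 : - (1 - frac y) < h := h2. have {h2'}h2' : h < 1 - frac y := h2'.
have hh : 0 <= frac y + h < 1 by apply/andP; split; lra.
rewrite tent_hi ?frac_shift // ?tent_hi //; try lra.
Qed.
End Tent.
Arguments frac {R}.
Arguments tent {R}.
Arguments tent_lip {R l}.
Arguments tent_near {R l}.
Arguments tent1 {R}.

Section Mx.
Variable R : realType.

Lemma entry_le_norm {m n} (x : 'M[R]_(m, n)) i j : `|x i j| <= `|x|.
Proof.
rewrite [X in _ <= X]/Num.norm /= mx_normrE.
exact: (le_bigmax _ (fun ij : 'I_m * 'I_n => `|x ij.1 ij.2|) (i, j)).
Qed.

Variable n : nat.
Variables (d l : R).
Hypothesis l0 : 0 < l.
Hypothesis l1 : l < 1.

Definition e0 : 'rV[R]_n.+1 := delta_mx 0 0.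
Definition uu (x : 'rV[R]_n.+1) : 'rV[R]_n.+1 := (d * tent l (x 0 0)) *: e0.

Lemma uu_per : W1inf_per uu.
Proof.
split.
  exists (`|d| * `|e0|); split; first by rewrite realE mulr_ge0 // normr_ge0.
  move=> M hM [a b] _ /=.
  move: a b => a b; set a1 := (a : 'rV[R]_n.+1) 0 0; set b1 := (b : 'rV[R]_n.+1) 0 0.
  rewrite /uu -scalerBl -mulrBr mx_normZ normrM.
  apply: (@le_trans _ _ (`|d| * `|a - b| * `|e0|)).
    rewrite ler_wpM2r // ler_wpM2l //.
    apply: le_trans (tent_lip l0 l1 a1 b1) _.
    by have := entry_le_norm (a - b : 'rV[R]_n.+1) 0 0; rewrite !mxE.
  rewrite mulrAC ler_wpM2r //; apply: ltW; exact: le_lt_trans hM.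
move=> j x; rewrite /uu !mxE /=.
by case: (0 == j) => /=; rewrite ?tent1 ?addr0.
Qed.

Lemma grad_uu (x : 'rV[R]_n.+1) : frac (x 0 0) != 0 -> frac (x 0 0) != l ->
  exists2 s : R, (s = 1 - l \/ s = - l) &
  forall j : 'I_n.+1, derive uu x (delta_mx 0 j) = if 0 == j then (d * s) *: e0 else 0.
Proof.
move=> f0 fl; have [s hs [e e0' he]] := tent_near l0 l1 _ f0 fl.
exists s => // j; rewrite /derive.
case: (boolP (0 == j)) => hj.
  apply: cvg_lim => //; apply: cvg_near_cst.
  rewrite /dnbhs /within /=; apply/nbhs_normP; exists e => // h /= hb hnz.
  rewrite /uu !mxE hj /= mulr1 [h + _]addrC -scalerBl -mulrBr he; last first.
    by rewrite distrC subr0 in hb.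
  rewrite scalerA; congr (_ *: _); field; exact: hnz.
rewrite (_ : (fun h => _) = (fun _ => 0)); first exact: lim_cst.
apply/funext => h; rewrite /uu /= !mxE (negbTE hj) /= mulr0 add0r.
by rewrite subrr scaler0.
Qed.
End Mx.
Arguments uu {R n}.
Arguments e0 {R n}.
Arguments grad_uu {R n d l}.
Arguments uu_per {R n d l}.

Section Det.
Variable R : realType.
Variable n : nat.

Definition Dg (a : R) : 'M[R]_n.+1 := diag_mx (\row_(i < n.+1) if i == 0 then a else 1).

Lemma det_Dg a : \det (Dg a) = a.
Proof.
rewrite det_diag (bigD1 0) //= mxE eqxx big1 ?mulr1 // => i /negbTE hi.
by rewrite mxE hi.
Qed.

Lemma Dg_grad (c d l s : R) (x : 'rV[R]_n.+1) :
  (forall j : 'I_n.+1, derive (uu d l) x (delta_mx 0 j) = if 0 == j then (d * s) *: e0 else 0) ->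
  Dg c + grad (uu d l) x = Dg (c + d * s).
Proof.
move=> hd; apply/matrixP => i j; rewrite !mxE hd.
case: (boolP (0 == j)) => hj; last first.
  rewrite mxE addr0; case: (boolP (i == j)) => //= hij.
  by move: hj; rewrite -(eqP hij) eq_sym => /negbTE ->.
rewrite !mxE -(eqP hj) /=; case: (i == 0) => /=; rewrite ?mulr1n ?mulr0n ?mulr1 ?mulr0 ?addr0 //.
Qed.
End Det.

Section Good.
Variable R : realType.

Lemma int_small (m : int) (y : R) : y = m%:~R -> - 1 < y < 1 -> m = 0.
Proof.
move=> -> /andP[a b].
have h1 : (0 : R) < (m + 1)%:~R by rewrite intrD1; lra.
rewrite ltr0z in h1; rewrite ltrz1 in b; lia.
Qed.

Lemma good_pt (l y : R) : 0 < l -> l < 1 -> @Q1 R y -> ~ (y = 0 \/ y = l \/ y = l - 1) ->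
  frac y != 0 /\ frac y != l.
Proof.
move=> l0 l1; rewrite /Q1 /= in_itv /= => /andP[ya yb] nB.
have h2 : (2^-1 : R) < 1 by rewrite invf_lt1 // ltr1n.
split; apply/eqP => hf; move: hf; rewrite /frac => hf.
  have : Num.floor y = 0.
    apply: (@int_small _ y); first by lra.
    by apply/andP; split; lra.
  by move=> h0; apply: nB; left; move: hf; rewrite h0 /=; lra.
have [hm|hm] := lerP 0 (Num.floor y).
  have : Num.floor y = 0.
    apply: (@int_small _ (y - l)); first by lra.
    have := (ler0z R (Num.floor y)); rewrite hm => hz.
    by apply/andP; split; lra.
  by move=> h0; apply: nB; right; left; move: hf; rewrite h0 /=; lra.
have : Num.floor y + 1 = 0.
  apply: (@int_small _ (y - l + 1)); first by rewrite intrD1; lra.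
  have : (Num.floor y)%:~R < (0 : R) by rewrite ltrz0.
  by move=> hz; apply/andP; split; lra.
move=> h0; apply: nB; right; right.
have : ((Num.floor y + 1)%:~R : R) = 0 by rewrite h0.
by rewrite intrD1; lra.
Qed.
End Good.

Section Main.
Variable R : realType.
Local Notation mu := (@lebesgue_measure R).

Definition Bad (l : R) : set R := [set 0] `|` [set l] `|` [set l - 1].

Lemma mBad l : measurable (Bad l).
Proof. by apply: measurableU; [apply: measurableU|]; exact: measurable_set1. Qed.

Lemma muBad l : mu (Bad l) = 0%E.
Proof.
have H2 (a b : \bar R) : a = 0%E -> b = 0%E -> (a + b <= 0)%E by move=> -> ->; rewrite adde0.
have h01 : mu ([set 0] `|` [set l]) = 0%E.
  apply/eqP; rewrite eq_le measure_ge0 andbT.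
  apply: (le_trans (measureU2 _ _ _)); [exact: measurable_set1|exact: measurable_set1|].
  by apply: H2; exact: lebesgue_measure_set1.
apply/eqP; rewrite eq_le measure_ge0 andbT.
apply: (le_trans (measureU2 _ _ _)); [by apply: measurableU; exact: measurable_set1|exact: measurable_set1|].
by apply: H2; [exact: h01|exact: lebesgue_measure_set1].
Qed.

Lemma main_lc n (g : R -> R) :
  (forall d, 0 <= g d) ->
  curl_inf_qc (fun xi : 'M[R]_n.+1 => g (\det xi)) ->
  level_convex (V := R^o) g.
Proof.
move=> g0 [_ [_ Hq]] lam s t /andP[la lb].
change (g (lam * s + (1 - lam) * t) <= Num.max (g s) (g t)).
have [->|lam0] := eqVneq lam 0.
  by rewrite mul0r add0r subr0 mul1r le_max lexx orbT.
have [->|lam1] := eqVneq lam 1.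
  by rewrite mul1r subrr mul0r addr0 le_max lexx.
have l0 : 0 < lam by rewrite lt_neqAle eq_sym lam0.
have l1 : lam < 1 by rewrite lt_neqAle lam1.
set c := lam * s + (1 - lam) * t.
set M := Num.max (g s) (g t).
have M0 : 0 <= M by rewrite le_max g0.
have := Hq (@Dg R n c); rewrite det_Dg => hcv.
rewrite -lee_fin; apply: (cvge_to_le hcv).
exists 0; split; first exact: real0.
move=> p p0.
apply: le_trans (ereal_inf_lbound _) _.
  by exists (uu (s - t) lam); first exact: uu_per.
rewrite /Lp_energy.
set G := (fun x => _).
have hint : (cube_integral G <= (M `^ p)%:E)%E.
  rewrite /cube_integral.
  apply: (@iint_bound R _ _ (Bad lam) (M `^ p) _ (mBad lam) (muBad lam)) => //.
  - exact: powR_ge0.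
  - by move=> x; rewrite /G lee_fin powR_ge0.
  move=> x Qx nB.
  have X00 : (\row_(i < n.+1) x (i : nat)) 0 0 = x 0%N by rewrite mxE.
  have [f0 fl] : frac ((\row_(i < n.+1) x (i : nat)) 0 0) != 0 /\ frac ((\row_(i < n.+1) x (i : nat)) 0 0) != lam.
    rewrite X00; apply: good_pt => // H; apply: nB; rewrite /Bad /=.
    by case: H => [h|[h|h]]; [left; left|left; right|right].
  have [s' hs hd] := @grad_uu R n (s - t) lam l0 l1 _ f0 fl.
  rewrite /G (@Dg_grad R n c (s - t) lam s') // det_Dg lee_fin.
  apply: ge0_ler_powR; rewrite ?nnegrE ?(ltW p0) ?g0 //.
  case: hs => ->; rewrite /c /M.
    by rewrite (_ : lam * s + (1 - lam) * t + (s - t) * (1 - lam) = s) ?le_max ?lexx //; ring.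
  by rewrite (_ : lam * s + (1 - lam) * t + (s - t) * - lam = t) ?le_max ?lexx ?orbT //; ring.
have G0 : (0 <= cube_integral G)%E.
  by apply: iint_ge0 => x; rewrite /G lee_fin powR_ge0.
have hp : 0 <= p^-1 by rewrite invr_ge0 ltW.
have := @gt0_ler_poweR R p^-1 hp (cube_integral G) ((M `^ p)%:E).
move=> /(_ _ _ hint) h; apply: le_trans (h _ _) _.
- by rewrite in_itv /= G0 leey.
- by rewrite in_itv /= lee_fin powR_ge0 leey.
rewrite poweR_EFin -powRrM mulfV ?gt_eqF // powRr1 //.
Qed.
End Main.

Section PQ.
Variable R : realType.

Lemma det_cast m N (e : m = N) (A : 'M[R]_N) :
  \det (\matrix_(i, j) A (cast_ord e i) (cast_ord e j)) = \det A.
Proof.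
case: N / e A => A; congr (\det _); apply/matrixP => i j.
by rewrite mxE !cast_ord_id.
Qed.

Variable n : nat.

Lemma ab0_prop : ((#|[set: 'I_n.+1]%SET| == #|[set: 'I_n.+1]%SET|) && (0 < #|[set: 'I_n.+1]%SET|))%N.
Proof. by rewrite eqxx cardsT card_ord. Qed.

Definition ab0 : minor_idx n.+1 := exist _ ([set: 'I_n.+1]%SET, [set: 'I_n.+1]%SET) ab0_prop.

Lemma cardT_eq : #|[set: 'I_n.+1]%SET| = n.+1.
Proof. by rewrite cardsT card_ord. Qed.

Lemma minor_ab0 (xi : 'M[R]_n.+1) : minor xi ab0 = \det xi.
Proof.
rewrite /minor -(det_cast _ _ cardT_eq xi); congr (\det _); apply/matrixP => i j.
rewrite !mxE; congr (xi _ _); apply: val_inj => /=.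
  rewrite (enum_val_nth ord0) enum_setT -enumT nth_enum_ord //.
  by rewrite -[X in (_ < X)%N]cardT_eq ltn_ord.
rewrite (enum_val_nth ord0) enum_setT -enumT nth_enum_ord //.
by rewrite -[X in (_ < X)%N]cardT_eq ltn_ord.
Qed.

Lemma pqc (g : R -> R) : level_convex (V := R^o) g ->
  polyquasiconvex (fun xi : 'M[R]_n.+1 => g (\det xi)).
Proof.
move=> lc; exists (fun v => g (v ab0)); split; last by move=> xi; rewrite ffunE minor_ab0.
move=> l v w hl; rewrite !ffunE.
exact: lc.
Qed.
End PQ.

Theorem mainTheorem14 (R : realType) (N : nat) (g : R -> R) (a1 a2 : R) :
  (0 < N)%N ->
  (forall d, 0 <= g d) ->
  lower_semicontinuous (fun d => (g d)%:E) ->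
  0 < a1 ->
  (forall d, a1 * `|d| + a2 <= g d) ->
  curl_inf_qc (fun xi : 'M[R]_N => g (\det xi)) ->
  level_convex (V := R^o) g /\
  polyquasiconvex (fun xi : 'M[R]_N => g (\det xi)).
Proof.
case: N => [//|n] _ g0 _ _ _ hq.
have lc := main_lc _ _ _ g0 hq.
by split => //; exact: pqc.
Qed.
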